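(* Let $N\geq 1$. The following two statements are equivalent. (A) (Matheron's conjecture) For every symmetric $N\times N$ matrix $\gamma$ with zero diagonal, $\pi(\gamma)\in\mathrm{cone}(0;\mathscr{V}_N^* )$ if and only if $\sum_{i,j=1}^N\gamma_{i,j}e_ie_j\leq 0$ for every $e\in\mathbb{Z}^N$ with $\sum_{i=1}^Ne_i=1$. (B) A symmetric $N\times N$ matrix $\rho$ with $\rho_{i,i}=1$ for all $i$ is a unit covariance if and only if $\sum_{i,j=1}^N\rho_{i,j}e_ie_j\geq 1$ for every $e\in\mathsf{E}_N$, where $\mathsf{E}_N=\{e\in\mathbb{Z}^N:\ \sum_i u_ie_i=1\text{ for some }u\in\{-1,1\}^N\}$.
   Context: A unit field on $[N]=\{1,\dots,N\}$ is a random vector $X\in\{-1,1\}^N$ with unit covariance $\rho^X_{i,j}=\mathbf{E}[X_iX_j]$; a matrix is a unit covariance if it is of this form. For a random subset $Y\subseteq[N]$, its covariogram is $\gamma^Y_{i,j}=\frac12\mathbb{P}(1_Y(i)\neq 1_Y(j))$; $\mathscr{V}_N$ is the set of all such covariograms. $\pi$ maps a symmetric matrix to its supra-diagonal array $(\gamma_{i,j})_{1\le i<j\le N}$, and $\mathscr{V}_N^*=\pi(\mathscr{V}_N)$. For a convex set $C$ and a point $x$, $\mathrm{cone}(x;C)$ is the smallest convex cone with apex $x$ containing $C$, i.e. $\{x+t(c-x): t\geq 0, c\in C\}$. *)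

(* Defs.v *)
From HB Require Import structures.
From mathcomp Require Import all_boot all_order all_algebra.
From mathcomp Require Import reals.
Set Implicit Arguments. Unset Strict Implicit. Unset Printing Implicit Defensive.
Import Order.TTheory GRing.Theory Num.Theory.
Local Open Scope ring_scope.

Definition is_distr (R : realType) (T : finType) (p : {ffun T -> R}) : Prop :=
  (forall x, 0 <= p x) /\ \sum_(x : T) p x = 1.

Definition sgn (R : realType) (b : bool) : R := if b then 1 else -1.

(* Unit covariance: rho_{ij} = E[X_i X_j] for some random vector
   X in {-1,1}^N (given by its law p on {-1,1}^N = {ffun 'I_N -> bool}). *)
Definition unit_covariance (R : realType) (N : nat) (rho : 'M[R]_N) : Prop :=
  exists p : {ffun {ffun 'I_N -> bool} -> R},
    is_distr p /\
    forall i j : 'I_N,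
      rho i j = \sum_(x : {ffun 'I_N -> bool}) p x * (sgn R (x i) * sgn R (x j)).

(* Covariogram of a random subset Y of [N] with law p on {set 'I_N}:
   gamma_{ij} = 1/2 P(1_Y(i) <> 1_Y(j)). *)
Definition covariogram (R : realType) (N : nat) (gamma : 'M[R]_N) : Prop :=
  exists p : {ffun {set 'I_N} -> R},
    is_distr p /\
    forall i j : 'I_N,
      gamma i j = 2^-1 * \sum_(Y : {set 'I_N} | (i \in Y) != (j \in Y)) p Y.

(* pi : supra-diagonal array (gamma_{ij})_{i<j}, as a function on the
   index pairs (i,j) with i < j. *)
Definition supdiag (R : realType) (N : nat) (g : 'M[R]_N)
  : {ffun {p : 'I_N * 'I_N | (nat_of_ord p.1 < nat_of_ord p.2)%N} -> R} :=
  [ffun p => g (val p).1 (val p).2].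

Definition VNstar (R : realType) (N : nat)
  (a : {ffun {p : 'I_N * 'I_N | (nat_of_ord p.1 < nat_of_ord p.2)%N} -> R}) : Prop :=
  exists g : 'M[R]_N, covariogram g /\ a = supdiag g.

Definition cone0 (R : realType) (T : finType) (C : {ffun T -> R} -> Prop)
  (x : {ffun T -> R}) : Prop :=
  exists t : R, 0 <= t /\ exists c, C c /\ forall k, x k = 0 + t * (c k - 0).

Definition qform (R : realType) (N : nat) (a : 'M[R]_N) (e : 'I_N -> int) : R :=
  \sum_(i < N) \sum_(j < N) a i j * (e i)%:~R * (e j)%:~R.

Definition in_EN (N : nat) (e : 'I_N -> int) : Prop :=
  exists u : {ffun 'I_N -> bool},
    \sum_(i < N) (if u i then e i else - e i) = 1%Z.

(* Main.v *)
Require Import Defs.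
From HB Require Import structures.
From mathcomp Require Import all_boot all_order all_algebra.
From mathcomp Require Import reals.
From mathcomp Require Import ring lra zify.
Set Implicit Arguments. Unset Strict Implicit. Unset Printing Implicit Defensive.
Import Order.TTheory GRing.Theory Num.Theory.
Local Open Scope ring_scope.
Section Stat.
Variables (R : realFieldType) (T : finType).

Definition stat_concl (S : {set T}) (M : T -> T -> R) :=
  exists phi : T -> R, (forall v, 0 <= phi v) /\ 0 < \sum_(v in S) phi v /\
    forall w, w \in S -> \sum_(v in S) phi v * M v w = phi w.

Lemma stat_absorb (S : {set T}) (M : T -> T -> R) z :
  z \in S -> M z z = 1 -> (forall u w, 0 <= M u w) ->
  (forall u, u \in S -> \sum_(w in S) M u w = 1) -> stat_concl S M.
Proof.
move=> Sz hzz hM hst.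
exists (fun v => (v == z)%:R); split; first by move=> v; rewrite ler0n.
have rest : \sum_(w in S :\ z) M z w = 0.
  by move: (hst z Sz); rewrite (big_setD1 z Sz) /= hzz => /(congr1 (fun x => x - 1)); rewrite addrC addrK subrr.
split.
  rewrite (big_setD1 z Sz) /= eqxx big1 ?addr0 ?ltr01 // => v; rewrite in_setD1 => /andP [/negbTE -> _] //.
move=> w Sw.
rewrite (big_setD1 z Sz) /= eqxx mul1r big1 ?addr0; last first.
  by move=> v; rewrite in_setD1 => /andP [/negbTE -> _]; rewrite mul0r.
have [->|wz] := eqVneq w z; first by rewrite hzz.
have /psumr_eq0P H : \sum_(w0 in S :\ z) M z w0 = 0 by [].
by rewrite H // ?in_setD1 ?wz // => ? _; apply: hM.
Qed.

Lemma stationary (n : nat) :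
  forall (S : {set T}) (M : T -> T -> R), #|S| = n.+1 ->
  (forall u w, 0 <= M u w) ->
  (forall u, u \in S -> \sum_(w in S) M u w = 1) -> stat_concl S M.
Proof.
elim: n => [|n IH] S M hS hM hst.
- have [z Sz] : exists z, z \in S.
    by apply/set0Pn; rewrite -card_gt0 hS.
  apply: (stat_absorb Sz) => //.
  move: (hst z Sz); rewrite (big_setD1 z Sz) /= big_pred0 ?addr0 // => v.
  have : #|S :\ z| = 0%N by rewrite (cardsD1 z S) Sz in hS; case: hS.
  by move/eqP; rewrite cards_eq0 => /eqP ->; rewrite inE.
have [z Sz] : exists z, z \in S.
  by apply/set0Pn; rewrite -card_gt0 hS.
have [hzz|hzz] := eqVneq (M z z) 1; first exact: (stat_absorb Sz).
have hle : M z z <= 1.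
  rewrite -(hst z Sz) (big_setD1 z Sz) /= lerDl sumr_ge0 // => *; exact: hM.
have hlt : 0 < 1 - M z z by rewrite subr_gt0 lt_neqAle hzz hle.
set S' := S :\ z.
have hS' : #|S'| = n.+1 by rewrite (cardsD1 z S) Sz in hS; case: hS.
set M' := fun u w => M u w + M u z * M z w / (1 - M z z).
have hM' : forall u w, 0 <= M' u w.
  move=> u w; rewrite /M' addr_ge0 ?divr_ge0 ?mulr_ge0 ?hM // ltW //.
have hsumS : forall u, u \in S -> \sum_(w in S') M u w = 1 - M u z.
  by move=> u Su; rewrite -(hst u Su) (big_setD1 z Sz) /= addrC addrK.
have hst' : forall u, u \in S' -> \sum_(w in S') M' u w = 1.
  move=> u; rewrite in_setD1 => /andP [_ Su].
  rewrite /M' big_split /= -mulr_suml -mulr_sumr (hsumS u Su) (hsumS z Sz).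
  field; exact: lt0r_neq0.
have [phi [phi0 [phipos phist]]] := IH S' M' hS' hM' hst'.
set c := (\sum_(v in S') phi v * M v z) / (1 - M z z).
have c0 : 0 <= c.
  rewrite /c; apply: divr_ge0; last exact: ltW.
  by apply: sumr_ge0 => v _; apply: mulr_ge0.
exists (fun v => if v == z then c else phi v); split.
  by move=> v; case: eqP.
have eqS : forall F : T -> R, \sum_(v in S') (if v == z then c else phi v) * F v
     = \sum_(v in S') phi v * F v.
  move=> F; apply: eq_bigr => v; rewrite in_setD1 => /andP [/negbTE -> _] //.
split.
  rewrite (big_setD1 z Sz) /= eqxx.
  have -> : \sum_(v in S') (if v == z then c else phi v) = \sum_(v in S') phi v.
    by apply: eq_bigr => v; rewrite in_setD1 => /andP [/negbTE -> _].
  by apply: (lt_le_trans phipos); rewrite -subr_ge0 addrK.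
move=> w Sw; rewrite (big_setD1 z Sz) /= eqxx eqS.
have [->|wz] := eqVneq w z.
  rewrite /c; field; exact: lt0r_neq0.

have Sw' : w \in S' by rewrite in_setD1 wz.
rewrite -(phist w Sw') /M'.
under [in RHS]eq_bigr do rewrite mulrDr.
rewrite big_split /= addrC; congr (_ + _).
rewrite /c mulrAC !mulr_suml; apply: eq_bigr => v _.
field; exact: lt0r_neq0.
Qed.
End Stat.

Lemma ray_scalar (R : realFieldType) (T : finType) (X : R) (Vv : T -> R)
  (t : T -> R) (m : T -> T -> R) (phi : T -> R) :
  (forall u, 0 < t u) -> (forall w, \sum_v phi v * m v w = phi w) ->
  (forall u, X = (1 - t u) * Vv u + t u * \sum_w m u w * Vv w) ->
  (\sum_v phi v / t v) * X = \sum_v (phi v / t v) * Vv v.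
Proof.
move=> tp hst hX.
transitivity (\sum_v ((phi v / t v) * Vv v - phi v * Vv v + phi v * \sum_w m v w * Vv w)).
  rewrite mulr_suml; apply: eq_bigr => v _; rewrite (hX v); field; exact: lt0r_neq0.
rewrite big_split /= sumrB.
have -> : \sum_v phi v * \sum_w m v w * Vv w = \sum_v phi v * Vv v.
  under eq_bigr do rewrite mulr_sumr.
  rewrite exchange_big /=; apply: eq_bigr => w _.
  by rewrite -(hst w) mulr_suml; apply: eq_bigr => v _; rewrite mulrA.
by rewrite subrK.
Qed.

Lemma ray (R : realFieldType) (T : finType) (u0 : T) (N : nat)
  (V : T -> 'I_N -> 'I_N -> R) (x : 'I_N -> 'I_N -> R) (t : T -> R) (m : T -> T -> R) :
  (forall u, 0 <= t u) -> (forall u w, 0 <= m u w) -> (forall u, \sum_w m u w = 1) ->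
  (forall u i j, x i j = (1 - t u) * V u i j + t u * \sum_w m u w * V w i j) ->
  exists p : {ffun T -> R}, (forall w, 0 <= p w) /\ \sum_w p w = 1 /\
     forall i j, x i j = \sum_w p w * V w i j.
Proof.
move=> t0 m0 m1 hx.
case: (boolP [exists u, t u == 0]).
  move=> /existsP [u /eqP tu].
  exists [ffun w => (w == u)%:R]; split; first by move=> w; rewrite ffunE ler0n.
  split.
    rewrite (bigD1 u) //= ffunE eqxx big1 ?addr0 // => w /negbTE wu.
    by rewrite ffunE wu.
  move=> i j; rewrite (bigD1 u) //= ffunE eqxx big1 ?addr0; last first.
    by move=> w /negbTE wu; rewrite ffunE wu mul0r.
  by rewrite (hx u) tu subr0 !mul1r mul0r addr0.
rewrite negb_exists => /forallP tn0.
have tp : forall u, 0 < t u by move=> u; rewrite lt0r tn0 t0.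
have hT : #|[set: T]| = #|T|.-1.+1.
  by rewrite cardsT prednK //; apply/card_gt0P; exists u0.
have [phi [phi0 [phipos phist]]] := stationary hT m0 (fun u _ => etrans (eq_bigl _ _ (fun w => in_setT w)) (m1 u)).
have phist' : forall w, \sum_v phi v * m v w = phi w.
  by move=> w; rewrite -(phist w (in_setT w)); apply: eq_bigl => v; rewrite in_setT.
have phipos' : 0 < \sum_v phi v.
  by move: phipos; under eq_bigl do rewrite in_setT.
set Z := \sum_v phi v / t v.
have Z0 : 0 <= Z by apply: sumr_ge0 => v _; rewrite divr_ge0 // ltW.
have Zn0 : Z != 0.
  apply/eqP => Ze.
  have H := psumr_eq0P (fun v _ => divr_ge0 (phi0 v) (ltW (tp v))) Ze.
  have : \sum_v phi v = 0.
    apply: big1 => v _; have := H v isT.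
    by move/eqP; rewrite mulf_eq0 invr_eq0 (negbTE (tn0 v)) orbF => /eqP.
  by move=> e; move: phipos'; rewrite e ltxx.
exists [ffun w => (phi w / t w) / Z]; split.
  by move=> w; rewrite ffunE !divr_ge0 // ltW.
split.
  under eq_bigr do rewrite ffunE.
  by rewrite -mulr_suml mulfV.
move=> i j.
have := ray_scalar tp phist' (fun u => hx u i j).
rewrite -/Z => e.
under eq_bigr do rewrite ffunE mulrAC.
by rewrite -mulr_suml -e mulrC mulrA mulVf // mul1r.
Qed.
Lemma subset_card_between (T : finType) (n : nat) : forall (A B : {set T}),
  A \subset B -> (#|A| + n <= #|B|)%N ->
  exists C : {set T}, [/\ A \subset C, C \subset B & #|C| = (#|A| + n)%N].
Proof.
elim: n => [|n IH] A B sAB hc.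
  by exists A; rewrite addn0.
have : (0 < #|B :\: A|)%N.
  rewrite cardsD (setIidPr sAB); lia.
rewrite card_gt0 => /set0Pn [x /setDP [xB xA]].
have sAB' : x |: A \subset B by rewrite subUset sub1set xB.
have cA' : #|x |: A| = #|A|.+1 by rewrite cardsU1 xA.
have [|C [h1 h2 h3]] := IH (x |: A) B sAB'; first by rewrite cA'; lia.
exists C; split => //.
  by apply: subset_trans h1; apply: subsetUr.
by rewrite h3 cA'; lia.
Qed.

Lemma sum_sub_le (N : nat) (P : pred 'I_N) (F : 'I_N -> int) :
  (forall i, 0 <= F i) -> \sum_(i | P i) F i <= \sum_i F i.
Proof.
move=> F0; rewrite big_mkcond /=; apply: ler_sum => i _.
by case: (P i) => //.
Qed.

Lemma step_sel (N : nat) (s : nat) (a r : 'I_N -> int) :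
  (forall i, 0 <= r i <= s.+1%:Z) ->
  \sum_i (s.+1%:Z * a i + r i) = s.+1%:Z ->
  exists c : 'I_N -> int, [/\ forall i, 0 <= c i <= 1,
     forall i, 0 <= r i - c i <= s%:Z & \sum_i (a i + c i) = 1].
Proof.
move=> hr hs.
set m := 1 - \sum_i a i.
have hsr : \sum_i r i = s.+1%:Z * m.
  rewrite /m mulrBr mulr1 -{1}hs big_split /= -mulr_sumr.
  by rewrite addrAC subrr add0r.
set A := [set i | r i == s.+1%:Z].
set B := [set i | 0 < r i].
have sAB : A \subset B.
  by apply/subsetP => i; rewrite !inE => /eqP ->.
have cA : #|A|%:Z * s.+1%:Z <= s.+1%:Z * m.
  have r0 : forall i, 0 <= r i by move=> i; case/andP: (hr i).
  rewrite -hsr; apply: (le_trans _ (@sum_sub_le N (fun i => i \in A) r r0)).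
  rewrite (eq_bigr (fun _ => s.+1%:Z)); last by move=> i; rewrite inE => /eqP.
  by rewrite sumr_const -mulr_natl natz.
have cB : s.+1%:Z * m <= #|B|%:Z * s.+1%:Z.
  rewrite -hsr.
  have -> : \sum_i r i = \sum_(i in B) r i.
    rewrite [RHS]big_mkcond /=; apply: eq_bigr => i _; rewrite inE.
    by case: ifP => // /negbT; rewrite -leNgt => h; apply/eqP; rewrite eq_le h; case/andP: (hr i).
  apply: le_trans (_ : \sum_(i in B) s.+1%:Z <= _); first by apply: ler_sum => i _; case/andP: (hr i).
  by rewrite sumr_const -mulr_natl natz.
have hm0 : #|A|%:Z <= m by nia.
have hmB : m <= #|B|%:Z by nia.
have [k mk] : exists k : nat, m = k%:Z.
  by exists `|m|%N; rewrite gez0_abs //; apply: le_trans hm0.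
have [|C [h1 h2 h3]] := @subset_card_between _ (k - #|A|) A B sAB.
  lia.
exists (fun i => if i \in C then 1 else 0); split.
- by move=> i; case: (i \in C).
- move=> i; have := hr i; case iC: (i \in C).
    have : i \in B by apply: (subsetP h2).
    rewrite inE => ri.
    case: (eqVneq (r i) s.+1%:Z) => e; first lia.
    move/eqP: e => e h; lia.
  have : i \notin A by apply/negP => iA; move: iC; rewrite (subsetP h1 _ iA).
  rewrite inE => /eqP ne h; lia.
- rewrite big_split /=.
  have -> : \sum_i (if i \in C then 1 else 0 : int) = #|C|%:Z.
    by rewrite -big_mkcond /= sumr_const -mulr_natl natz mulr1.
  have hAk : (#|A| <= k)%N by rewrite -lez_nat -mk.
  rewrite h3; have -> : (#|A| + (k - #|A|))%N = k by lia.
  by rewrite -mk /m addrC subrK.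
Qed.

Section Bil.
Variables (R : realType) (N : nat) (g : 'M[R]_N).

Definition bilR (x y : 'I_N -> R) := \sum_(i < N) \sum_(j < N) g i j * x i * y j.
Definition intv (e : 'I_N -> int) : 'I_N -> R := fun i => (e i)%:~R.
Definition Dg := \sum_(i < N) \sum_(j < N) `|g i j|.

Lemma qformE e : qform g e = bilR (intv e) (intv e).
Proof. by []. Qed.

Lemma Dg_ge0 : 0 <= Dg.
Proof. by apply: sumr_ge0 => i _; apply: sumr_ge0 => j _. Qed.

Lemma bilR_ext x x' y y' : (forall i, x i = x' i) -> (forall j, y j = y' j) ->
  bilR x y = bilR x' y'.
Proof.
by move=> hx hy; apply: eq_bigr => i _; apply: eq_bigr => j _; rewrite hx hy.
Qed.

Lemma bilRDr x y y' : bilR x (fun j => y j + y' j) = bilR x y + bilR x y'.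
Proof.
rewrite /bilR -big_split /=; apply: eq_bigr => i _; rewrite -big_split /=.
by apply: eq_bigr => j _; rewrite mulrDr.
Qed.

Lemma bilR0r x y : (forall j, y j = 0) -> bilR x y = 0.
Proof.
move=> hy; apply: big1 => i _; apply: big1 => j _; by rewrite hy mulr0.
Qed.

Hypothesis gsym : g^T = g.

Lemma gsymE i j : g j i = g i j.
Proof. by rewrite -[in RHS]gsym mxE. Qed.

Lemma bilR_sym x y : bilR x y = bilR y x.
Proof.
rewrite /bilR exchange_big; apply: eq_bigr => i _; apply: eq_bigr => j _.
by rewrite gsymE; ring.
Qed.

Lemma bilR_sqD x y : bilR (fun i => x i + y i) (fun i => x i + y i) =
  bilR x x + 2 * bilR x y + bilR y y.
Proof.
transitivity (\sum_(i < N) \sum_(j < N) (g i j * x i * x j + g i j * x i * y j + g i j * y i * x j + g i j * y i * y j)).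
  by apply: eq_bigr => i _; apply: eq_bigr => j _; ring.
under eq_bigr do rewrite !big_split /=.
rewrite !big_split /=.
rewrite -/(bilR x x) -/(bilR x y) -/(bilR y x) -/(bilR y y) (bilR_sym y x).
ring.
Qed.

Lemma bilR_abs x y : (forall i, `|x i| <= 1) -> (forall j, `|y j| <= 1) ->
  `|bilR x y| <= Dg.
Proof.
move=> hx hy; apply: (le_trans (ler_norm_sum _ _ _)); apply: ler_sum => i _.
apply: (le_trans (ler_norm_sum _ _ _)); apply: ler_sum => j _.
rewrite !normrM -[X in _ <= X]mulr1 -mulrA ler_wpM2l //.
rewrite -[1]mulr1 ler_pM //.
Qed.

Hypothesis K : forall e : 'I_N -> int, \sum_(i < N) e i = 1%Z -> qform g e <= 0.

Lemma pair_bound (f h : 'I_N -> int) : \sum_i f i = 1%Z -> \sum_i h i = 1%Z ->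
  (forall i, -1 <= f i - h i <= 1) -> bilR (intv f) (intv h) <= Dg.
Proof.
move=> sf sh hd.
have qf := K sf; have qh := K sh.
set d := fun i => intv f i + intv (fun i => - h i) i.
have e1 : bilR d d = bilR (intv f) (intv f) - 2 * bilR (intv f) (intv h) + bilR (intv h) (intv h).
  rewrite bilR_sqD.
  have -> : bilR (intv (fun i => - h i)) (intv (fun i => - h i)) = bilR (intv h) (intv h).
    by apply: eq_bigr => i _; apply: eq_bigr => j _; rewrite /intv !intrN; ring.
  have -> : bilR (intv f) (intv (fun i => - h i)) = - bilR (intv f) (intv h).
    rewrite /bilR -sumrN; apply: eq_bigr => i _; rewrite -sumrN.
    by apply: eq_bigr => j _; rewrite /intv !intrN; ring.
  ring.
have hdd : `|bilR d d| <= Dg.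
  have hd' : forall i, `|d i| <= 1.
    move=> i; rewrite /d /intv -intrD -intr_norm lerz1 ler_norml.
    by case/andP: (hd i) => h1 h2; apply/andP; split; lia.
  exact: bilR_abs.
move: hdd; rewrite ler_norml => /andP [h1 _].
move: qf qh h1 (Dg_ge0); rewrite !qformE e1; lra.
Qed.

Lemma PoszS (s : nat) : (s.+1)%:Z = s%:Z + 1.
Proof. lia. Qed.

Lemma split_vec (s : nat) (a r c0 : 'I_N -> int) i :
  s.+1%:Z * a i + r i = (a i + c0 i) + (s%:Z * a i + (r i - c0 i)).
Proof. rewrite PoszS; ring. Qed.

Lemma split_sum (s : nat) (a r c0 : 'I_N -> int) :
  \sum_i (s.+1%:Z * a i + r i) = s.+1%:Z -> \sum_i (a i + c0 i) = 1 ->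
  \sum_i (s%:Z * a i + (r i - c0 i)) = s%:Z.
Proof.
move=> hs hac.
have E : \sum_i (s.+1%:Z * a i + r i) =
  \sum_i (a i + c0 i) + \sum_i (s%:Z * a i + (r i - c0 i)).
  by rewrite -big_split; apply: eq_bigr => i _; apply: (split_vec s a r c0).
move: E; rewrite hs hac PoszS => E.
by apply: (addIr 1); rewrite E addrC.
Qed.

Lemma intv_split (s : nat) (a r c0 : 'I_N -> int) j :
  intv (fun i => s.+1%:Z * a i + r i) j =
  intv (fun i => a i + c0 i) j + intv (fun i => s%:Z * a i + (r i - c0 i)) j.
Proof. by rewrite /intv -intrD (split_vec s a r c0). Qed.

Lemma Rb (s : nat) : forall a r : 'I_N -> int, (forall i, 0 <= r i <= s%:Z) ->
  \sum_i (s%:Z * a i + r i) = s%:Z ->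
  forall c : 'I_N -> int, (forall i, 0 <= c i <= 1) -> \sum_i (a i + c i) = 1 ->
  bilR (intv (fun i => a i + c i)) (intv (fun i => s%:Z * a i + r i)) <= s%:R * Dg.
Proof.
elim: s => [|s IH] a r hr hs c hc hac.
  rewrite bilR0r ?mul0r // => j; rewrite /intv.
  have -> : r j = 0 by case/andP: (hr j) => ? ?; lia.
  by rewrite mul0r addr0.
have [c0 [hc0 hr' hac0]] := step_sel hr hs.
rewrite (bilR_ext (fun i => erefl) (@intv_split s a r c0)) bilRDr.
have h1 : bilR (intv (fun i => a i + c i)) (intv (fun i => a i + c0 i)) <= Dg.
  apply: pair_bound => // i.
  by case/andP: (hc i) => ? ?; case/andP: (hc0 i) => ? ?; apply/andP; split; lia.
have h2 := IH a (fun i => r i - c0 i) hr' (split_sum hs hac0) c hc hac.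
by rewrite -addn1 natrD mulrDl mul1r addrC; apply: lerD.
Qed.

Lemma Qb (s : nat) : forall a r : 'I_N -> int, (forall i, 0 <= r i <= s%:Z) ->
  \sum_i (s%:Z * a i + r i) = s%:Z ->
  qform g (fun i => s%:Z * a i + r i) <= s%:R * (s%:R - 1) * Dg.
Proof.
elim: s => [|s IH] a r hr hs.
  rewrite qformE bilR0r ?mul0r // => j; rewrite /intv.
  have -> : r j = 0 by case/andP: (hr j) => ? ?; lia.
  by rewrite mul0r addr0.
have [c0 [hc0 hr' hac0]] := step_sel hr hs.
rewrite qformE (bilR_ext (@intv_split s a r c0) (@intv_split s a r c0)) bilR_sqD.
have h1 := K hac0.
have h2 := Rb hr' (split_sum hs hac0) hc0 hac0.
have h3 := IH a (fun i => r i - c0 i) hr' (split_sum hs hac0).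
rewrite qformE in h1 h3.
have D0 := Dg_ge0.
have -> : s.+1%:R * (s.+1%:R - 1) * Dg = 2 * (s%:R * Dg) + s%:R * (s%:R - 1) * Dg :> R.
  by rewrite -addn1 natrD; ring.
have h2' := ler_wpM2l (ler0n R 2) h2.
by apply: (le_trans (lerD (lerD h1 h2') h3)); rewrite add0r.
Qed.

Lemma qbound (e : 'I_N -> int) (n : nat) : \sum_i e i = n.+1%:Z ->
  qform g e <= (n.+1%:R ^+ 2 - 1) * Dg.
Proof.
move=> he.
set s := n.+1.
have s0 : (0 < s%:Z) by [].
have hr : forall i, 0 <= (e i %% s%:Z)%Z <= s%:Z.
  by move=> i; rewrite modz_ge0 //= ltW // ltz_pmod.
have ee : forall i, e i = s%:Z * (e i %/ s%:Z)%Z + (e i %% s%:Z)%Z.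
  by move=> i; rewrite {1}(divz_eq (e i) s%:Z) mulrC.
have hs : \sum_i (s%:Z * (e i %/ s%:Z)%Z + (e i %% s%:Z)%Z) = s%:Z.
  by rewrite -[RHS]he; apply: eq_bigr => i _; rewrite -ee.
have -> : qform g e = qform g (fun i => s%:Z * (e i %/ s%:Z)%Z + (e i %% s%:Z)%Z).
  by rewrite !qformE; apply: bilR_ext => i; rewrite /intv -ee.
apply: (le_trans (Qb hr hs)); apply: ler_wpM2r; first exact: Dg_ge0.
rewrite /s -addn1 natrD; set x : R := n%:R.
have : 0 <= x by rewrite /x ler0n.
nra.
Qed.
End Bil.
Section Dist.
Variables (R : realType) (N : nat).
Notation FT := {ffun 'I_N -> bool}.

Definition Vx (x : FT) (i j : 'I_N) : R := sgn R (x i) * sgn R (x j).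
Definition flip (u w : FT) : FT := [ffun k => u k == w k].

Lemma sgn_prod (b c : bool) : sgn R b * sgn R c = 1 - 2 * (b != c)%:R.
Proof. by case: b; case: c; rewrite /sgn /=; ring. Qed.

Lemma sgn_mul (b c : bool) : sgn R b * sgn R c = sgn R (b == c).
Proof. by case: b; case: c; rewrite /sgn /=; ring. Qed.

Lemma sgn_sq (b : bool) : sgn R b * sgn R b = 1.
Proof. by case: b; rewrite /sgn /=; ring. Qed.

Lemma flipK u : involutive (flip u).
Proof. by move=> w; apply/ffunP => k; rewrite !ffunE; case: (u k); case: (w k). Qed.

Lemma V_flip u x i j : Vx u i j * Vx x i j = Vx (flip u x) i j.
Proof.
rewrite /Vx !ffunE -!sgn_mul; ring.
Qed.

Lemma sum_ffun_set (F : FT -> R) :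
  \sum_(x : FT) F x = \sum_(Y : {set 'I_N}) F [ffun i => i \in Y].
Proof.
rewrite (reindex (fun Y : {set 'I_N} => [ffun i => i \in Y])) //=.
exists (fun x : FT => [set i | x i]) => [Y _ | x _].
  by apply/setP => i; rewrite inE ffunE.
by apply/ffunP => i; rewrite ffunE inE.
Qed.

Lemma key_sets (p : {set 'I_N} -> R) i j : \sum_(Y : {set 'I_N}) p Y = 1 ->
  \sum_(Y : {set 'I_N}) p Y * (sgn R (i \in Y) * sgn R (j \in Y)) =
  1 - 4 * (2^-1 * \sum_(Y : {set 'I_N} | (i \in Y) != (j \in Y)) p Y).
Proof.
move=> hp.
under eq_bigr do rewrite sgn_prod mulrBr mulr1.
rewrite sumrB hp; congr (_ - _).
rewrite [in RHS]big_mkcond /= mulr_sumr mulr_sumr; apply: eq_bigr => Y _.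
by case: ifP => _ /=; field.
Qed.

Lemma cov_to_uc (g : 'M[R]_N) : covariogram g ->
  unit_covariance (\matrix_(i, j) (1 - 4 * g i j)).
Proof.
case=> p [[p0 p1] hg].
exists [ffun x : FT => p [set i | x i]]; split.
  split; first by move=> x; rewrite ffunE.
  rewrite sum_ffun_set -p1; apply: eq_bigr => Y _; rewrite ffunE.
  by congr (p _); apply/setP => i; rewrite inE ffunE.
move=> i j; rewrite mxE hg -key_sets // sum_ffun_set.
apply: eq_bigr => Y _; rewrite !ffunE.
have -> : [set k | [ffun k0 => k0 \in Y] k] = Y by apply/setP => k; rewrite inE ffunE.
by [].
Qed.

Lemma uc_to_cov (rho : 'M[R]_N) : unit_covariance rho ->
  covariogram (\matrix_(i, j) (4^-1 * (1 - rho i j))).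
Proof.
case=> p [[p0 p1] hr].
exists [ffun Y : {set 'I_N} => p [ffun k => k \in Y]]; split.
  split; first by move=> Y; rewrite ffunE.
  by rewrite -p1 sum_ffun_set; apply: eq_bigr => Y _; rewrite ffunE.
have p1' : \sum_(Y : {set 'I_N}) [ffun Y : {set 'I_N} => p [ffun k => k \in Y]] Y = 1.
  by rewrite -p1 sum_ffun_set; apply: eq_bigr => Y _; rewrite ffunE.
move=> i j; rewrite mxE hr.
have := key_sets i j p1'.
rewrite sum_ffun_set.
have -> : \sum_(Y : {set 'I_N}) [ffun Y0 : {set 'I_N} => p [ffun k => k \in Y0]] Y * (sgn R (i \in Y) * sgn R (j \in Y))
  = \sum_(Y : {set 'I_N}) p [ffun k => k \in Y] * (sgn R ([ffun k => k \in Y] i) * sgn R ([ffun k => k \in Y] j)).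
  by apply: eq_bigr => Y _; rewrite !ffunE.
by move=> ->; field.
Qed.

Lemma cov_props (g : 'M[R]_N) : covariogram g -> (forall i, g i i = 0) /\ g^T = g.
Proof.
case=> p [_ hg]; split.
  by move=> i; rewrite hg big_pred0 ?mulr0 // => Y; rewrite eqxx.
apply/matrixP => i j; rewrite mxE !hg; congr (_ * _).
by apply: eq_bigl => Y; rewrite eq_sym.
Qed.

Lemma supdiag_eq (gamma g : 'M[R]_N) (t : R) :
  (forall i, gamma i i = 0) -> gamma^T = gamma ->
  (forall i, g i i = 0) -> g^T = g ->
  (forall k, supdiag gamma k = 0 + t * (supdiag g k - 0)) ->
  forall i j, gamma i j = t * g i j.
Proof.
move=> d1 s1 d2 s2 hk i j.
case: (ltngtP i j) => [lt|gt|eq].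
- by have := hk (@exist _ (fun p : 'I_N * 'I_N => (nat_of_ord p.1 < nat_of_ord p.2)%N) (i, j) lt);
  rewrite !ffunE /= subr0 add0r.
- have := hk (@exist _ (fun p : 'I_N * 'I_N => (nat_of_ord p.1 < nat_of_ord p.2)%N) (j, i) gt).
  rewrite !ffunE /= subr0 add0r => e.
  by rewrite -[gamma]s1 -[g]s2 !mxE.
- by have := ord_inj eq => ->; rewrite d1 d2 mulr0.
Qed.

Lemma qform_ext (a b : 'M[R]_N) e : (forall i j, a i j = b i j) -> qform a e = qform b e.
Proof. by move=> h; apply: eq_bigr => i _; apply: eq_bigr => j _; rewrite h. Qed.

Lemma qform_lin (a : 'M[R]_N) (al be : R) e :
  qform (\matrix_(i, j) (al + be * a i j)) e =
  al * ((\sum_i e i)%:~R) ^+ 2 + be * qform a e.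
Proof.
rewrite /qform.
transitivity (\sum_(i < N) \sum_(j < N) (al * ((e i)%:~R * (e j)%:~R) + be * (a i j * (e i)%:~R * (e j)%:~R))).
  by apply: eq_bigr => i _; apply: eq_bigr => j _; rewrite mxE; ring.
under eq_bigr do rewrite big_split /= -!mulr_sumr.
rewrite big_split /= -!mulr_sumr; congr (_ * _ + _ * _).
rewrite rmorph_sum expr2 mulr_suml; apply: eq_bigr => i _.
by rewrite mulr_sumr.
Qed.

Lemma qform_switch (a : 'M[R]_N) (u : FT) e :
  qform (\matrix_(i, j) (sgn R (u i) * sgn R (u j) * a i j)) e =
  qform a (fun i => if u i then e i else - e i).
Proof.
apply: eq_bigr => i _; apply: eq_bigr => j _; rewrite mxE.
by case: (u i); case: (u j); rewrite /sgn /= ?intrN; ring.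
Qed.

Lemma qform_neg (a : 'M[R]_N) e : qform a (fun i => - e i) = qform a e.
Proof. by apply: eq_bigr => i _; apply: eq_bigr => j _; rewrite !intrN; ring. Qed.

Lemma sx_formula (x : FT) (e : 'I_N -> int) :
  \sum_i (if x i then e i else - e i) = 2 * \sum_i (if x i then e i else 0) - \sum_i e i.
Proof.
rewrite mulr_sumr -sumrB; apply: eq_bigr => i _; case: (x i); ring.
Qed.

Lemma sx_nonzero (x u : FT) (e : 'I_N -> int) :
  \sum_i (if u i then e i else - e i) = 1%Z ->
  \sum_i (if x i then e i else - e i) != 0.
Proof.
rewrite !sx_formula.
set A := \sum_i (if x i then e i else 0).
set B := \sum_i (if u i then e i else 0).
set S := \sum_i e i.
move=> h; apply/eqP => h'; lia.
Qed.

Lemma sum_sgn_int (x : FT) (e : 'I_N -> int) :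
  \sum_i sgn R (x i) * (e i)%:~R = (\sum_i (if x i then e i else - e i))%:~R.
Proof.
rewrite rmorph_sum; apply: eq_bigr => i _.
by case: (x i); rewrite /sgn /= ?intrN; ring.
Qed.

Lemma uc_H (rho : 'M[R]_N) : unit_covariance rho ->
  forall e, in_EN e -> 1 <= qform rho e.
Proof.
case=> p [[p0 p1] hr] e [u hu].
have -> : qform rho e = \sum_x p x * ((\sum_i sgn R (x i) * (e i)%:~R) ^+ 2).
  rewrite /qform.
  under eq_bigr => i _ do under eq_bigr => j _ do rewrite hr !mulr_suml.
  under eq_bigr do rewrite exchange_big /=.
  rewrite exchange_big /=; apply: eq_bigr => x _.
  rewrite expr2 mulr_suml mulr_sumr; apply: eq_bigr => i _.
  rewrite mulr_sumr mulr_sumr; apply: eq_bigr => j _; ring.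
rewrite -{1}p1; apply: ler_sum => x _.
rewrite -[X in X <= _]mulr1 ler_wpM2l // sum_sgn_int.
set s := \sum_i _.
have sn0 : s != 0 by apply: (sx_nonzero x hu).
rewrite -rmorphXn /= ler1z.
have : (s < 0) || (0 < s) by rewrite -neq_lt sn0.
case/orP => h; nia.
Qed.
End Dist.

Lemma finish (R : realType) (a Dg q : R) : 0 <= a -> 0 <= Dg -> q <= a * Dg ->
  1 <= (a + 1) + (- 4 * (4 * (1 + Dg))^-1) * q.
Proof.
move=> a0 D0 hq.
set s := (4 * (1 + Dg))^-1.
have s0 : 0 < s by rewrite /s invr_gt0; lra.
have h1 : 4 * s * q <= 4 * s * (a * Dg) by rewrite ler_wpM2l //; lra.
have h2 : a * Dg <= a * (1 + Dg) by rewrite ler_wpM2l //; lra.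
have h3 : 4 * s * (a * (1 + Dg)) = a by rewrite /s; field; lra.
have h4 : 4 * s * (a * Dg) <= 4 * s * (a * (1 + Dg)) by rewrite ler_wpM2l //; lra.
have -> : (- 4 * s) * q = - (4 * s * q) by ring.
lra.
Qed.

Theorem theorem2 (R : realType) (N : nat) (hN : (1 <= N)%N) :
  (* (A) Matheron's conjecture *)
  (forall gamma : 'M[R]_N,
     gamma^T = gamma -> (forall i, gamma i i = 0) ->
     (cone0 (@VNstar R N) (supdiag gamma) <->
      (forall e : 'I_N -> int, \sum_(i < N) e i = 1%Z -> qform gamma e <= 0)))
  <->
  (* (B) *)
  (forall rho : 'M[R]_N,
     rho^T = rho -> (forall i, rho i i = 1) ->
     (unit_covariance rho <->
      (forall e : 'I_N -> int, in_EN e -> 1 <= qform rho e))).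
Proof.
split => [HA | HB].
- move=> rho rsym rdiag; split; first exact: uc_H.
  move=> Hrho.
  have rsymE : forall i j, rho j i = rho i j by move=> i j; rewrite -[in RHS]rsym mxE.
  have Hu : forall u : {ffun 'I_N -> bool}, exists tm : R * {ffun {ffun 'I_N -> bool} -> R},
      [/\ 0 <= tm.1, forall w, 0 <= tm.2 w, \sum_w tm.2 w = 1 &
        forall i j, rho i j = (1 - tm.1) * Vx R u i j + tm.1 * \sum_w tm.2 w * Vx R w i j].
    move=> u.
    pose ru := \matrix_(i, j) (sgn R (u i) * sgn R (u j) * rho i j).
    pose gu := \matrix_(i, j) (4^-1 + (- 4^-1) * ru i j).
    have gusym : gu^T = gu.
      by apply/matrixP => i j; rewrite !mxE rsymE; congr (_ + _ * _); ring.
    have gudiag : forall i, gu i i = 0.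
      by move=> i; rewrite !mxE rdiag mulr1 sgn_sq; field.
    have Kgu : forall e : 'I_N -> int, \sum_(i < N) e i = 1%Z -> qform gu e <= 0.
      move=> e he; rewrite qform_lin qform_switch he.
      have : in_EN (fun i => if u i then e i else - e i).
        exists u; rewrite -[RHS]he; apply: eq_bigr => i _.
        by case: (u i) => //; rewrite opprK.
      move/Hrho; lra.
    have [t [t0 [c [[g [gcov ->]] hk]]]] := (HA gu gusym gudiag).2 Kgu.
    have [gdiag gsym] := cov_props gcov.
    have hgu := supdiag_eq gudiag gusym gdiag gsym hk.
    have [mu [[mu0 mu1] hmu]] := cov_to_uc gcov.
    exists (t, [ffun w => mu (flip u w)]); split => //=.
    + by move=> w; rewrite ffunE.
    + under eq_bigr do rewrite ffunE.
      by rewrite -mu1 (reindex_inj (can_inj (flipK u))) /=; apply: eq_bigr => w _; rewrite flipK.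
    + move=> i j.
      have e1 : rho i j = Vx R u i j * ru i j.
        rewrite /ru mxE /Vx; have ha := @sgn_sq R (u i); have hb := @sgn_sq R (u j).
        set a := sgn R (u i) in ha *; set b := sgn R (u j) in hb *.
        have -> : a * b * (a * b * rho i j) = (a * a) * (b * b) * rho i j by ring.
        by rewrite ha hb !mul1r.
      have e2 : ru i j = (1 - t) + t * (1 - 4 * g i j).
        have := hgu i j; rewrite /gu mxE => h.
        have -> : ru i j = 1 - 4 * gu i j by rewrite /gu mxE; field.
        by rewrite hgu; ring.
      have e3 := hmu i j; rewrite mxE in e3.
      rewrite e1 e2 e3 mulrDr mulrCA mulr_sumr.
      congr (_ + _ * _); first by ring.
      rewrite (reindex_inj (can_inj (flipK u))) /=; apply: eq_bigr => w _.
      by rewrite (_ : sgn R (flip u w i) * sgn R (flip u w j) = Vx R (flip u w) i j) // mulrCA V_flip flipK ffunE.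
  pose F u := proj1_sig (boolp.cid (Hu u)).
  have hF : forall u, _ := fun u => proj2_sig (boolp.cid (Hu u)).
  have u0 : {ffun 'I_N -> bool} := [ffun => true].
  have [p [p0 [p1 hp]]] := @ray R _ u0 N (@Vx R N) (fun i j => rho i j) (fun u => (F u).1)
     (fun u w => (F u).2 w)
     (fun u => let: And4 a _ _ _ := hF u in a)
     (fun u => let: And4 _ b _ _ := hF u in b)
     (fun u => let: And4 _ _ c _ := hF u in c)
     (fun u => let: And4 _ _ _ d := hF u in d).
  by exists p; split => //.
- move=> gamma gsym gdiag; split.
  + case=> t [t0 [c [[g [gcov ->]] hk]]] e he.
    have [gd gs] := cov_props gcov.
    have hg := supdiag_eq gdiag gsym gd gs hk.
    have uc := cov_to_uc gcov.
    have h1 : qform gamma e = t * qform g e.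
      rewrite /qform mulr_sumr; apply: eq_bigr => i _; rewrite mulr_sumr.
      by apply: eq_bigr => j _; rewrite hg; ring.
    have h2 : qform g e = 4^-1 * ((\sum_i e i)%:~R) ^+ 2 + (- 4^-1) * qform (\matrix_(i, j) (1 - 4 * g i j)) e.
      by rewrite -qform_lin; apply: qform_ext => i j; rewrite !mxE; field.
    rewrite h1 h2 he expr1n.
    have : in_EN e.
      by exists [ffun => true]; rewrite -[RHS]he; apply: eq_bigr => i _; rewrite ffunE.
    move/(uc_H uc) => h.
    apply: mulr_ge0_le0 => //; lra.
  + move=> K.
    have gsymE : forall i j, gamma j i = gamma i j by move=> i j; rewrite -[in RHS]gsym mxE.
    have D0 := Dg_ge0 gamma.
    set D := 1 + Dg gamma.
    have Dp : 0 < D by rewrite /D; lra.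
    pose rho := \matrix_(i, j) (1 + (- 4 * (4 * D)^-1) * gamma i j).
    have rsym : rho^T = rho by apply/matrixP => i j; rewrite !mxE gsymE.
    have rdiag : forall i, rho i i = 1 by move=> i; rewrite mxE gdiag mulr0 addr0.
    have Hr : forall e, in_EN e -> 1 <= qform rho e.
      move=> e [u hu].
      have sn := sx_nonzero [ffun => true] hu.
      have sn' : \sum_i e i != 0.
        by move: sn; rewrite (eq_bigr (fun i => e i)) // => i _; rewrite ffunE.
      rewrite qform_lin mul1r.
      have : (\sum_i e i < 0) || (0 < \sum_i e i) by rewrite -neq_lt sn'.
      case E : (\sum_i e i) => [[|n]|n] //= _.
        have hb := qbound gsym K E.
        rewrite -[(Posz n.+1)%:~R]/(n.+1%:R : R).
        rewrite -[(n.+1%:R : R) ^+ 2](subrK 1).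
        apply: (finish _ D0 hb); have h1 : (1 : R) <= n.+1%:R by rewrite ler1n.
      by rewrite subr_ge0 -[X in X <= _](expr1n _ 2) ler_pXn2r ?nnegrE.
      have E' : \sum_i (- e i) = n.+1%:Z by rewrite sumrN E NegzE opprK.
      have hb := qbound gsym K E'.
      rewrite qform_neg in hb.
      rewrite NegzE intrN sqrrN -[(Posz n.+1)%:~R]/(n.+1%:R : R).
      rewrite -[(n.+1%:R : R) ^+ 2](subrK 1).
      apply: (finish _ D0 hb); have h1 : (1 : R) <= n.+1%:R by rewrite ler1n.
      by rewrite subr_ge0 -[X in X <= _](expr1n _ 2) ler_pXn2r ?nnegrE.
    have uc := (HB rho rsym rdiag).2 Hr.
    have cov := uc_to_cov uc.
    exists (4 * D); split; first lra.
    exists (supdiag (\matrix_(i, j) (4^-1 * (1 - rho i j)))); split.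
      by exists (\matrix_(i, j) (4^-1 * (1 - rho i j))).
    by move=> k; rewrite !ffunE !mxE; field; apply: lt0r_neq0.
Qed.
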